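(* Let $f\in C^6([-1,1])$ and $M:=\sup\{|f^{(6)}(x)| : x\in[-1,1]\}$. Define \[ T(f):=\tfrac{2}{5}\cdot\tfrac13\bigl(f(-1)+4f(0)+f(1)\bigr)+\tfrac35\Bigl(f\bigl(-\tfrac{\sqrt3}{3}\bigr)+f\bigl(\tfrac{\sqrt3}{3}\bigr)\Bigr),\qquad I(f):=\int_{-1}^1 f(x)\,dx . \] Then $|T(f)-I(f)|\le \dfrac{M}{28350}$. *)

(* Defs.v *)
From Stdlib Require Import Reals Lra.
From Coquelicot Require Import Coquelicot.
Open Scope R_scope.

Definition I11 (x : R) : Prop := -1 <= x <= 1.

Definition has_deriv_on_I11 (g g' : R -> R) : Prop :=
  forall x, I11 x -> forall eps, 0 < eps -> exists delta, 0 < delta /\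
    forall y, I11 y -> Rabs (y - x) < delta ->
      Rabs (g y - g x - g' x * (y - x)) <= eps * Rabs (y - x).

Definition continuous_on_I11 (g : R -> R) : Prop :=
  forall x, I11 x -> forall eps, 0 < eps -> exists delta, 0 < delta /\
    forall y, I11 y -> Rabs (y - x) < delta -> Rabs (g y - g x) < eps.

(* D is a witness that f is C^6 on [-1,1]: D 0 = f on [-1,1],
   D (k+1) is the derivative of D k on [-1,1] for k < 6,
   and D 6 (= f^(6)) is continuous on [-1,1]. *)
Definition C6_on_I11 (f : R -> R) (D : nat -> R -> R) : Prop :=
  (forall x, I11 x -> D 0%nat x = f x) /\
  (forall k, (k < 6)%nat -> has_deriv_on_I11 (D k) (D (S k))) /\
  continuous_on_I11 (D 6%nat).

Definition Tq (f : R -> R) : R :=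
  (2/5) * ((1/3) * (f (-1) + 4 * f 0 + f 1))
  + (3/5) * (f (- (sqrt 3 / 3)) + f (sqrt 3 / 3)).

Definition Iq (f : R -> R) : R := RInt f (-1) 1.

(* Main.v *)
Require Import Defs.
From Stdlib Require Import Reals Lra Psatz Lia.
From Coquelicot Require Import Coquelicot.
Open Scope R_scope.


Definition cl (x : R) : R := Rmax (-1) (Rmin 1 x).

Lemma cl_I11 x : I11 (cl x).
Proof. unfold cl, I11, Rmax, Rmin; repeat destruct Rle_dec; lra. Qed.
Lemma cl_id x : I11 x -> cl x = x.
Proof. unfold cl, I11, Rmax, Rmin; intros; repeat destruct Rle_dec; lra. Qed.
Lemma cl_lip x y : Rabs (cl y - cl x) <= Rabs (y - x).
Proof. unfold cl, Rmax, Rmin; repeat destruct Rle_dec; unfold Rabs; repeat destruct Rcase_abs; lra. Qed.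
Lemma cl_dist x y : I11 x -> Rabs (y - cl y) <= Rabs (y - x).
Proof. unfold cl, I11, Rmax, Rmin; intros; repeat destruct Rle_dec; unfold Rabs; repeat destruct Rcase_abs; lra. Qed.

Lemma cont_clamp g x : continuous_on_I11 g -> I11 x -> continuous (fun y => g (cl y)) x.
Proof.
  intros Hg Hx. apply continuity_pt_filterlim.
  intros eps Heps. destruct (Hg x Hx eps Heps) as [d [Hd Hy]].
  exists d; split; [exact Hd|]. intros y [_ Hyx].
  simpl in *. unfold R_dist in *. rewrite (cl_id x Hx).
  apply Hy. apply cl_I11. pose proof (cl_lip x y) as HL. rewrite (cl_id x Hx) in HL. lra.
Qed.

Lemma deriv_cont g g' : has_deriv_on_I11 g g' -> continuous_on_I11 g.
Proof.
  intros Hd x Hx eps Heps.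
  destruct (Hd x Hx 1 Rlt_0_1) as [d [Hd0 Hy]].
  assert (Hp : 0 < Rabs (g' x) + 1) by (pose proof (Rabs_pos (g' x)); lra).
  exists (Rmin d (eps / (Rabs (g' x) + 1))). split.
  { apply Rmin_pos; [lra|]. apply Rdiv_lt_0_compat; lra. }
  intros y Hy1 Hyx.
  assert (H1 : Rabs (y - x) < d) by (eapply Rlt_le_trans; [exact Hyx| apply Rmin_l]).
  assert (H2 : Rabs (y - x) < eps / (Rabs (g' x) + 1)) by (eapply Rlt_le_trans; [exact Hyx| apply Rmin_r]).
  specialize (Hy y Hy1 H1).
  assert (H3 : Rabs (y - x) * (Rabs (g' x) + 1) < eps).
  { apply Rmult_lt_reg_r with (/ (Rabs (g' x) + 1)). apply Rinv_0_lt_compat; lra.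
    rewrite Rmult_assoc, Rinv_r by lra. rewrite Rmult_1_r. exact H2. }
  assert (H4 : Rabs (g' x * (y - x)) = Rabs (g' x) * Rabs (y - x)) by apply Rabs_mult.
  pose proof (Rabs_triang (g y - g x - g' x * (y - x)) (g' x * (y - x))).
  replace (g y - g x - g' x * (y - x) + g' x * (y - x)) with (g y - g x) in H by ring.
  nra.
Qed.

Lemma ext_deriv G g x : has_deriv_on_I11 G g -> continuous_on_I11 g -> I11 x ->
  is_derive (fun y => G (cl y) + g (cl y) * (y - cl y)) x (g x).
Proof.
  intros HG Hg Hx. apply is_derive_Reals. intros eps Heps.
  assert (He1 : 0 < eps / 4) by lra.
  destruct (HG x Hx _ He1) as [d1 [Hd1 H1]].
  destruct (Hg x Hx _ He1) as [d2 [Hd2 H2]].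
  exists (mkposreal _ (Rmin_pos _ _ Hd1 Hd2)). intros h Hh0 Hh. simpl in Hh.
  assert (Hh1 : Rabs h < d1) by (eapply Rlt_le_trans; [exact Hh| apply Rmin_l]).
  assert (Hh2 : Rabs h < d2) by (eapply Rlt_le_trans; [exact Hh| apply Rmin_r]).
  set (y := x + h). set (e := cl y).
  assert (Hcx : cl x = x) by (apply cl_id; exact Hx).
  rewrite Hcx. replace (x - x) with 0 by ring.
  assert (Hex : Rabs (e - x) <= Rabs h).
  { pose proof (cl_lip x y) as HL. rewrite Hcx in HL. unfold e. replace h with (y - x) by (unfold y; ring). exact HL. }
  assert (Hye : Rabs (y - e) <= Rabs h).
  { pose proof (cl_dist x y Hx) as HL. unfold e. replace h with (y - x) by (unfold y; ring). exact HL. }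
  assert (HeI : I11 e) by apply cl_I11.
  specialize (H1 e HeI ltac:(lra)).
  specialize (H2 e HeI ltac:(lra)).
  assert (Hs : Rabs ((g e - g x) * (y - e)) <= eps / 4 * Rabs h).
  { rewrite Rabs_mult. apply Rmult_le_compat; try apply Rabs_pos; lra. }
  assert (Hsum : Rabs (G e + g e * (y - e) - (G x + g x * 0) - g x * h) <= eps / 2 * Rabs h).
  { replace (G e + g e * (y - e) - (G x + g x * 0) - g x * h) with
      ((G e - G x - g x * (e - x)) + (g e - g x) * (y - e)) by (unfold y; ring).
    eapply Rle_trans; [apply Rabs_triang|]. nra. }
  replace ((G e + g e * (y - e) - (G x + g x * 0)) / h - g x) with
     ((G e + g e * (y - e) - (G x + g x * 0) - g x * h) / h) by (field; exact Hh0).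
  unfold Rdiv. rewrite Rabs_mult, Rabs_inv.
  assert (Hp : 0 < Rabs h) by (apply Rabs_pos_lt; exact Hh0).
  apply Rmult_lt_reg_r with (Rabs h); [exact Hp|].
  rewrite Rmult_assoc, Rinv_l by lra. nra.
Qed.

Lemma dmul f g x a b : is_derive f x a -> is_derive g x b ->
  is_derive (fun t => f t * g t) x (a * g x + f x * b).
Proof. intros Ha Hb. apply (is_derive_mult f g x a b Ha Hb). intros; apply Rmult_comm. Qed.
Lemma dplus f g x a b : is_derive f x a -> is_derive g x b ->
  is_derive (fun t => f t + g t) x (a + b).
Proof. intros Ha Hb. apply (@is_derive_plus R_AbsRing R_NormedModule f g x a b Ha Hb). Qed.
Lemma dminus f g x a b : is_derive f x a -> is_derive g x b ->
  is_derive (fun t => f t - g t) x (a - b).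
Proof. intros Ha Hb. apply (@is_derive_minus R_AbsRing R_NormedModule f g x a b Ha Hb). Qed.
Lemma deq (f : R -> R) (x a b : R) : is_derive f x a -> a = b -> is_derive f x b.
Proof. intros H ->; exact H. Qed.
Lemma cmul (f g : R -> R) (x : R) : continuous f x -> continuous g x -> continuous (fun t => f t * g t) x.
Proof. intros; apply (@continuous_mult R_UniformSpace R_AbsRing f g); auto. Qed.
Lemma cplus (f g : R -> R) (x : R) : continuous f x -> continuous g x -> continuous (fun t => f t + g t) x.
Proof. intros; apply (@continuous_plus R_UniformSpace R_AbsRing R_NormedModule f g); auto. Qed.
Lemma cminus (f g : R -> R) (x : R) : continuous f x -> continuous g x -> continuous (fun t => f t - g t) x.
Proof. intros; apply (@continuous_minus R_UniformSpace R_AbsRing R_NormedModule f g); auto. Qed.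

Section Piece.
Variable D : nat -> R -> R.
Hypothesis HD : forall k, (k < 6)%nat -> has_deriv_on_I11 (D k) (D (S k)).
Hypothesis HC : continuous_on_I11 (D 6%nat).

Lemma contD k : (k <= 6)%nat -> continuous_on_I11 (D k).
Proof.
  intros Hk. destruct (Nat.eq_dec k 6) as [->|Hn]; [exact HC|].
  apply (deriv_cont _ (D (S k))). apply HD. lia.
Qed.

Definition E k y := D k (cl y) + D (S k) (cl y) * (y - cl y).

Lemma E_der k x : (k < 6)%nat -> I11 x -> is_derive (E k) x (D (S k) x).
Proof. intros Hk Hx. apply ext_deriv; auto. apply contD; lia. Qed.
Lemma E_cont k x : (k < 6)%nat -> I11 x -> continuous (E k) x.
Proof. intros Hk Hx. apply (@ex_derive_continuous R_AbsRing R_NormedModule). eexists. apply E_der; auto. Qed.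
Lemma Dc_cont k x : (k <= 6)%nat -> I11 x -> continuous (fun y => D k (cl y)) x.
Proof. intros Hk Hx. apply cont_clamp; auto. apply contD; auto. Qed.
Lemma E_val k x : I11 x -> E k x = D k x.
Proof. intros Hx. unfold E. rewrite cl_id by auto. ring. Qed.

Variable K : nat -> R -> R.
Hypothesis HK : forall j t, (j < 5)%nat -> is_derive (K j) t (K (S j) t).
Hypothesis HK5 : forall t, is_derive (K 5%nat) t (-1).

Definition Phi (F : nat -> R -> R) t :=
  K 0%nat t * F 5%nat t - K 1%nat t * F 4%nat t + K 2%nat t * F 3%nat t
  - K 3%nat t * F 2%nat t + K 4%nat t * F 1%nat t - K 5%nat t * F 0%nat t.

Lemma Kc j x : (j <= 5)%nat -> continuous (K j) x.
Proof.
  intros Hj. apply (@ex_derive_continuous R_AbsRing R_NormedModule).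
  destruct (Nat.eq_dec j 5) as [->|Hn]; [eexists; apply HK5|]. eexists; apply HK; lia.
Qed.

Lemma piece a b : -1 <= a -> a <= b -> b <= 1 ->
  is_RInt (fun t => K 0%nat t * D 6%nat t + D 0%nat t) a b (Phi D b - Phi D a).
Proof.
  intros Ha Hab Hb.
  set (df := fun t =>
     (K 1%nat t * E 5%nat t + K 0%nat t * D 6%nat (cl t))
   - (K 2%nat t * E 4%nat t + K 1%nat t * D 5%nat (cl t))
   + (K 3%nat t * E 3%nat t + K 2%nat t * D 4%nat (cl t))
   - (K 4%nat t * E 2%nat t + K 3%nat t * D 3%nat (cl t))
   + (K 5%nat t * E 1%nat t + K 4%nat t * D 2%nat (cl t))
   - ((-1) * E 0%nat t + K 5%nat t * D 1%nat (cl t))).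
  assert (HI : forall x, Rmin a b <= x <= Rmax a b -> I11 x).
  { intros x Hx. rewrite Rmin_left, Rmax_right in Hx by lra. unfold I11; lra. }
  assert (H := is_RInt_derive (Phi E) df a b).
  assert (Hder : forall x, Rmin a b <= x <= Rmax a b -> is_derive (Phi E) x (df x)).
  { intros x Hx. specialize (HI x Hx). unfold Phi, df.
    repeat rewrite cl_id by exact HI.
    repeat match goal with
     | |- is_derive (fun t => @?f t - @?g t) _ _ => apply (dminus f g)
     | |- is_derive (fun t => @?f t + @?g t) _ _ => apply (dplus f g)
     | |- is_derive (fun t => @?f t * @?g t) _ _ => apply (dmul f g)
     end; first [apply HK5 | (apply HK; lia) | (apply E_der; [lia|exact HI])]. }
  assert (Hcont : forall x, Rmin a b <= x <= Rmax a b -> continuous df x).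
  { intros x Hx. specialize (HI x Hx). unfold df.
    repeat match goal with
     | |- continuous (fun t => @?f t - @?g t) _ => apply (cminus f g)
     | |- continuous (fun t => @?f t + @?g t) _ => apply (cplus f g)
     | |- continuous (fun t => @?f t * @?g t) _ => apply (cmul f g)
     end; first [apply continuous_const | (apply Kc; lia)
      | (apply E_cont; [lia|exact HI]) | (apply Dc_cont; [lia|exact HI])]. }
  specialize (H Hder Hcont).
  replace (Phi D b - Phi D a) with (minus (Phi E b) (Phi E a)).
  2:{ unfold Phi. rewrite !E_val by (unfold I11; lra). unfold minus, plus, opp; simpl. ring. }
  apply (is_RInt_ext df); [|exact H].
  intros x Hx. rewrite Rmin_left, Rmax_right in Hx by lra.
  assert (HIx : I11 x) by (unfold I11; lra).
  unfold df. cbv beta. rewrite !E_val by exact HIx. rewrite !cl_id by exact HIx. match goal with |- ?l = ?r => change (@eq R l r) end. ring.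
Qed.
End Piece.

Definition Kf (s e n w : R) (j : nat) (t : R) : R :=
 let X := s*(t-e) in let Y := s*(t-n) in
 match j with
 | 0%nat => (2/15)*X^5/120 + w*Y^5/120 - X^6/720
 | 1%nat => s*((2/15)*X^4/24 + w*Y^4/24 - X^5/120)
 | 2%nat => s^2*((2/15)*X^3/6 + w*Y^3/6 - X^4/24)
 | 3%nat => s^3*((2/15)*X^2/2 + w*Y^2/2 - X^3/6)
 | 4%nat => s^4*((2/15)*X + w*Y - X^2/2)
 | _ => s^5*((2/15) + w - X)
 end.

Lemma Kf_der s e n w j t : (j < 5)%nat -> is_derive (Kf s e n w j) t (Kf s e n w (S j) t).
Proof.
  intros Hj. unfold Kf.
  destruct j as [|[|[|[|[|j]]]]]; try lia; auto_derive; auto; match goal with |- ?l = ?r => change (@eq R l r) end; field.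
Qed.

Lemma Kf_der5 s e n w t : s * s = 1 -> is_derive (Kf s e n w 5) t (-1).
Proof.
  intros Hs. unfold Kf. auto_derive; auto.
  match goal with |- ?l = ?r => change (@eq R l r) end.
  transitivity (- ((s*s)*(s*s)*(s*s))); [ring|]. rewrite Hs. ring.
Qed.

Definition cc := sqrt 3 / 3.
Lemma cc2 : cc * cc = 1/3.
Proof. unfold cc. replace (sqrt 3 / 3 * (sqrt 3 / 3)) with (sqrt 3 * sqrt 3 / 9) by field.
  rewrite sqrt_sqrt by lra. field. Qed.

Lemma ident (D : nat -> R -> R) :
  let c := cc in
  Phi (Kf 1 (-1) 0 0) D (-c) - Phi (Kf 1 (-1) 0 0) D (-1)
  + (Phi (Kf 1 (-1) (-c) (3/5)) D 0 - Phi (Kf 1 (-1) (-c) (3/5)) D (-c))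
  + (Phi (Kf (-1) 1 c (3/5)) D c - Phi (Kf (-1) 1 c (3/5)) D 0)
  + (Phi (Kf (-1) 1 0 0) D 1 - Phi (Kf (-1) 1 0 0) D c)
  = 2/5 * (1/3 * (D 0%nat (-1) + 4 * D 0%nat 0 + D 0%nat 1)) + 3/5 * (D 0%nat (-c) + D 0%nat c).
Proof.
  intros c. pose proof cc2 as H2. fold c in H2. clearbody c.
  assert (c2 : c^2 = 1/3) by (replace (c^2) with (c*c) by ring; exact H2).
  assert (c3 : c^3 = c/3) by (replace (c^3) with ((c*c)*c) by ring; rewrite H2; field).
  assert (c4 : c^4 = 1/9) by (replace (c^4) with ((c*c)*(c*c)) by ring; rewrite H2; field).
  assert (c5 : c^5 = c/9) by (replace (c^5) with ((c*c)*(c*c)*c) by ring; rewrite H2; field).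
  assert (c6 : c^6 = 1/27) by (replace (c^6) with ((c*c)*(c*c)*(c*c)) by ring; rewrite H2; field).
  unfold Phi, Kf. cbv zeta. field_simplify. rewrite ?c6, ?c5, ?c4, ?c3, ?c2. field.
Qed.

Lemma pbound (k g d h : R -> R) a b A B M :
  a <= b -> is_RInt (fun t => k t * d t + g t) a b A ->
  is_RInt (fun t => k t * 1 + h t) a b B ->
  ex_RInt g a b -> ex_RInt h a b ->
  (forall t, a < t < b -> 0 <= k t) -> (forall t, a < t < b -> Rabs (d t) <= M) ->
  Rabs (A - RInt g a b) <= M * (B - RInt h a b).
Proof.
  intros Hab HA HB [G HG] [Hh HH] Hk Hd.
  rewrite (is_RInt_unique g a b G HG), (is_RInt_unique h a b Hh HH).
  assert (H1 : is_RInt (fun t => k t * d t) a b (A - G)).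
  { apply (is_RInt_ext (fun y => minus (k y * d y + g y) (g y))).
    - intros x _. unfold minus, plus, opp; simpl. ring.
    - apply (is_RInt_minus _ _ a b A G HA HG). }
  assert (H2 : is_RInt k a b (B - Hh)).
  { apply (is_RInt_ext (fun y => minus (k y * 1 + h y) (h y))).
    - intros x _. unfold minus, plus, opp; simpl. ring.
    - apply (is_RInt_minus _ _ a b B Hh HB HH). }
  assert (H3 : is_RInt (fun t => M * k t) a b (M * (B - Hh))).
  { apply (is_RInt_scal k a b M _ H2). }
  assert (H4 : is_RInt (fun t => (- M) * k t) a b ((-M) * (B - Hh))).
  { apply (is_RInt_scal k a b (-M) _ H2). }
  apply Rabs_le. split.
  - assert (H := is_RInt_le _ _ a b _ _ Hab H4 H1).
    enough (- (M * (B - Hh)) <= A - G) by lra.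
    replace (- (M * (B - Hh))) with (- M * (B - Hh)) by ring. apply H.
    intros x Hx. specialize (Hk x Hx). specialize (Hd x Hx).
    apply Rabs_le_between in Hd. nra.
  - apply (is_RInt_le _ _ a b _ _ Hab H1 H3).
    intros x Hx. specialize (Hk x Hx). specialize (Hd x Hx).
    apply Rabs_le_between in Hd. nra.
Qed.

Lemma ex_RInt_D (g : R -> R) a b : continuous_on_I11 g -> -1 <= a -> a <= b -> b <= 1 -> ex_RInt g a b.
Proof.
  intros Hg Ha Hab Hb.
  apply (ex_RInt_ext (fun y => g (cl y))).
  - intros x Hx. rewrite Rmin_left, Rmax_right in Hx by lra. rewrite cl_id; auto. unfold I11; lra.
  - apply (@ex_RInt_continuous R_CompleteNormedModule). intros z Hz. rewrite Rmin_left, Rmax_right in Hz by lra.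
    apply cont_clamp; auto. unfold I11; lra.
Qed.

Lemma deriv_of_is_derive (g g' : R -> R) : (forall x, is_derive g x (g' x)) -> has_deriv_on_I11 g g'.
Proof.
  intros Hg x Hx eps Heps. specialize (Hg x). apply is_derive_Reals in Hg.
  destruct (Hg eps Heps) as [d Hd]. exists d. split; [apply cond_pos|].
  intros y Hy Hyx. destruct (Req_dec y x) as [->|Hne].
  - replace (g x - g x - g' x * (x - x)) with 0 by ring. rewrite Rabs_R0. replace (x - x) with 0 by ring.
    rewrite Rabs_R0. lra.
  - assert (Hh : y - x <> 0) by lra. specialize (Hd (y - x) Hh Hyx).
    replace (x + (y - x)) with y in Hd by ring.
    replace (g y - g x - g' x * (y - x)) with (((g y - g x) / (y - x) - g' x) * (y - x)) by (field; exact Hh).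
    rewrite Rabs_mult. apply Rmult_le_compat_r; [apply Rabs_pos|lra].
Qed.

Definition P (k : nat) (x : R) : R :=
  match k with 0%nat => x^6/720 | 1%nat => x^5/120 | 2%nat => x^4/24 | 3%nat => x^3/6
  | 4%nat => x^2/2 | 5%nat => x | _ => 1 end.

Lemma P_HD k : (k < 6)%nat -> has_deriv_on_I11 (P k) (P (S k)).
Proof.
  intros Hk. apply deriv_of_is_derive. intros x.
  destruct k as [|[|[|[|[|[|k]]]]]]; try lia; unfold P; auto_derive; auto;
  match goal with |- ?l = ?r => change (@eq R l r) end; field.
Qed.

Lemma P_HC : continuous_on_I11 (P 6).
Proof. intros x _ eps Heps. exists 1. split; [lra|]. intros. simpl. rewrite Rminus_diag, Rabs_R0. lra. Qed.

Lemma RInt_P0 a b : RInt (P 0) a b = (b^7 - a^7)/5040.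
Proof.
  apply is_RInt_unique.
  replace ((b^7 - a^7)/5040) with (minus (b^7/5040) (a^7/5040)) by (unfold minus, plus, opp; simpl; field).
  apply (is_RInt_derive (fun x => x^7/5040)).
  - intros x _. unfold P. auto_derive; auto. match goal with |- ?l = ?r => change (@eq R l r) end; field.
  - intros x _. unfold P. apply (@ex_derive_continuous R_AbsRing R_NormedModule). auto_derive. auto.
Qed.

Lemma sub_bound l u s c : -1/5 <= l -> l <= s <= u -> 5773/10000 <= c -> 0 <= l + 5773/10000 ->
  0 <= 3/5*(l+5773/10000)^5 - (1+u)^5*((1+u)/6 - 2/15) ->
  0 <= 2/15*(1+s)^5/120 + 3/5*(s+c)^5/120 - (1+s)^6/720.
Proof.
  intros Hl Hs Hc Hl0 Hn.
  assert (H1 : (l+5773/10000)^5 <= (s+c)^5) by (apply pow_incr; lra).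
  assert (H2 : (1+s)^5 <= (1+u)^5) by (apply pow_incr; lra).
  assert (H3 : 0 <= (1+s)^5) by (apply pow_le; lra).
  assert (H4 : 0 <= (1+s)/6 - 2/15 <= (1+u)/6 - 2/15) by lra.
  replace ((1+s)^6) with ((1+s)^5*(1+s)) by ring.
  nra.
Qed.

Lemma core s c : -1/5 <= s <= 0 -> 5773/10000 <= c ->
  0 <= 2/15*(1+s)^5/120 + 3/5*(s+c)^5/120 - (1+s)^6/720.
Proof.
  intros Hs Hc.
  destruct (Rle_dec s (-1/5 + 1/100)) as [Hs0|Hs0].
  { apply (sub_bound (-1/5 + 0/100) (-1/5 + 1/100)); try lra; simpl; lra. }
  destruct (Rle_dec s (-1/5 + 2/100)) as [Hs1|Hs1].
  { apply (sub_bound (-1/5 + 1/100) (-1/5 + 2/100)); try lra; simpl; lra. }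
  destruct (Rle_dec s (-1/5 + 3/100)) as [Hs2|Hs2].
  { apply (sub_bound (-1/5 + 2/100) (-1/5 + 3/100)); try lra; simpl; lra. }
  destruct (Rle_dec s (-1/5 + 4/100)) as [Hs3|Hs3].
  { apply (sub_bound (-1/5 + 3/100) (-1/5 + 4/100)); try lra; simpl; lra. }
  destruct (Rle_dec s (-1/5 + 5/100)) as [Hs4|Hs4].
  { apply (sub_bound (-1/5 + 4/100) (-1/5 + 5/100)); try lra; simpl; lra. }
  destruct (Rle_dec s (-1/5 + 6/100)) as [Hs5|Hs5].
  { apply (sub_bound (-1/5 + 5/100) (-1/5 + 6/100)); try lra; simpl; lra. }
  destruct (Rle_dec s (-1/5 + 7/100)) as [Hs6|Hs6].
  { apply (sub_bound (-1/5 + 6/100) (-1/5 + 7/100)); try lra; simpl; lra. }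
  destruct (Rle_dec s (-1/5 + 8/100)) as [Hs7|Hs7].
  { apply (sub_bound (-1/5 + 7/100) (-1/5 + 8/100)); try lra; simpl; lra. }
  destruct (Rle_dec s (-1/5 + 9/100)) as [Hs8|Hs8].
  { apply (sub_bound (-1/5 + 8/100) (-1/5 + 9/100)); try lra; simpl; lra. }
  destruct (Rle_dec s (-1/5 + 10/100)) as [Hs9|Hs9].
  { apply (sub_bound (-1/5 + 9/100) (-1/5 + 10/100)); try lra; simpl; lra. }
  destruct (Rle_dec s (-1/5 + 11/100)) as [Hs10|Hs10].
  { apply (sub_bound (-1/5 + 10/100) (-1/5 + 11/100)); try lra; simpl; lra. }
  destruct (Rle_dec s (-1/5 + 12/100)) as [Hs11|Hs11].
  { apply (sub_bound (-1/5 + 11/100) (-1/5 + 12/100)); try lra; simpl; lra. }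
  destruct (Rle_dec s (-1/5 + 13/100)) as [Hs12|Hs12].
  { apply (sub_bound (-1/5 + 12/100) (-1/5 + 13/100)); try lra; simpl; lra. }
  destruct (Rle_dec s (-1/5 + 14/100)) as [Hs13|Hs13].
  { apply (sub_bound (-1/5 + 13/100) (-1/5 + 14/100)); try lra; simpl; lra. }
  destruct (Rle_dec s (-1/5 + 15/100)) as [Hs14|Hs14].
  { apply (sub_bound (-1/5 + 14/100) (-1/5 + 15/100)); try lra; simpl; lra. }
  destruct (Rle_dec s (-1/5 + 16/100)) as [Hs15|Hs15].
  { apply (sub_bound (-1/5 + 15/100) (-1/5 + 16/100)); try lra; simpl; lra. }
  destruct (Rle_dec s (-1/5 + 17/100)) as [Hs16|Hs16].
  { apply (sub_bound (-1/5 + 16/100) (-1/5 + 17/100)); try lra; simpl; lra. }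
  destruct (Rle_dec s (-1/5 + 18/100)) as [Hs17|Hs17].
  { apply (sub_bound (-1/5 + 17/100) (-1/5 + 18/100)); try lra; simpl; lra. }
  destruct (Rle_dec s (-1/5 + 19/100)) as [Hs18|Hs18].
  { apply (sub_bound (-1/5 + 18/100) (-1/5 + 19/100)); try lra; simpl; lra. }
  apply (sub_bound (-1/5 + 19/100) (-1/5 + 20/100)); try lra; simpl; lra.
Qed.

Lemma cc_pos : 0 < cc.
Proof. unfold cc. assert (0 < sqrt 3) by (apply sqrt_lt_R0; lra). lra. Qed.
Lemma cc_lb : 5773/10000 <= cc.
Proof. pose proof cc2. pose proof cc_pos. destruct (Rle_lt_dec (5773/10000) cc) as [h|h]; [exact h|].
  assert (cc * cc < 5773/10000 * (5773/10000)) by (apply Rmult_le_0_lt_compat; lra). lra. Qed.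
Lemma cc_ub : cc <= 1.
Proof. pose proof cc2. pose proof cc_pos. destruct (Rle_lt_dec cc 1) as [h|h]; [exact h|].
  assert (1 * 1 < cc * cc) by (apply Rmult_le_0_lt_compat; lra). lra. Qed.

Lemma simple_nn X : 0 <= X <= 4/5 -> 0 <= 2/15*X^5/120 - X^6/720.
Proof. intros H. assert (0 <= X^5) by (apply pow_le; lra).
  replace (X^6) with (X^5*X) by ring. nra. Qed.

Lemma K1_nn t : -1 <= t <= -cc -> 0 <= Kf 1 (-1) 0 0 0 t.
Proof.
  intros Ht. pose proof cc_lb. pose proof cc_ub. unfold Kf. cbv zeta.
  pose proof (simple_nn (1*(t - -1)) ltac:(lra)). lra.
Qed.
Lemma K4_nn t : cc <= t <= 1 -> 0 <= Kf (-1) 1 0 0 0 t.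
Proof.
  intros Ht. pose proof cc_lb. pose proof cc_ub. unfold Kf. cbv zeta.
  pose proof (simple_nn (-1*(t - 1)) ltac:(lra)). lra.
Qed.
Lemma K2_nn t : -cc <= t <= 0 -> 0 <= Kf 1 (-1) (-cc) (3/5) 0 t.
Proof.
  intros Ht. pose proof cc_lb. pose proof cc_ub. unfold Kf. cbv zeta.
  assert (HY : 0 <= (1*(t - - cc))^5) by (apply pow_le; lra).
  destruct (Rle_dec t (-1/5)).
  - pose proof (simple_nn (1*(t - -1)) ltac:(lra)).
    remember (1*(t - -1)) as X. remember (1*(t - - cc)) as Y. lra.
  - pose proof (core t cc ltac:(lra) cc_lb) as Hc.
    replace (1*(t - -1)) with (1 + t) by ring. replace (1*(t - - cc)) with (t + cc) by ring. lra.
Qed.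
Lemma K3_nn t : 0 <= t <= cc -> 0 <= Kf (-1) 1 cc (3/5) 0 t.
Proof.
  intros Ht. pose proof cc_lb. pose proof cc_ub. unfold Kf. cbv zeta.
  assert (HY : 0 <= (-1*(t - cc))^5) by (apply pow_le; lra).
  destruct (Rle_dec (1/5) t).
  - pose proof (simple_nn (-1*(t - 1)) ltac:(lra)).
    remember (-1*(t - 1)) as X. remember (-1*(t - cc)) as Y. lra.
  - pose proof (core (-t) cc ltac:(lra) cc_lb) as Hc.
    replace (-1*(t - 1)) with (1 + - t) by ring. replace (-1*(t - cc)) with (- t + cc) by ring. lra.
Qed.

Lemma combine (s e n w : R) (D : nat -> R -> R) M a b :
  s * s = 1 ->
  (forall k, (k < 6)%nat -> has_deriv_on_I11 (D k) (D (S k))) ->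
  continuous_on_I11 (D 6%nat) ->
  (forall t, I11 t -> Rabs (D 6%nat t) <= M) ->
  -1 <= a -> a <= b -> b <= 1 ->
  (forall t, a < t < b -> 0 <= Kf s e n w 0 t) ->
  Rabs (Phi (Kf s e n w) D b - Phi (Kf s e n w) D a - RInt (D 0%nat) a b)
   <= M * (Phi (Kf s e n w) P b - Phi (Kf s e n w) P a - RInt (P 0%nat) a b).
Proof.
  intros Hs HD HC HM Ha Hab Hb Hk.
  apply (pbound (Kf s e n w 0) (D 0%nat) (D 6%nat) (P 0%nat) a b); auto.
  - apply piece; auto. intros; apply Kf_der; auto. intros; apply Kf_der5; auto.
  - apply (piece P P_HD P_HC); auto. intros; apply Kf_der; auto. intros; apply Kf_der5; auto.
  - apply ex_RInt_D; auto. apply (deriv_cont _ (D 1%nat)). apply HD; lia.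
  - apply ex_RInt_D; auto. apply (deriv_cont _ (P 1%nat)). apply P_HD; lia.
  - intros t Ht. apply HM. unfold I11; lra.
Qed.

Theorem proposition5 (f : R -> R) (D : nat -> R -> R) (M : R) :
  C6_on_I11 f D ->
  is_lub (fun y => exists x, I11 x /\ y = Rabs (D 6%nat x)) M ->
  Rabs (Tq f - Iq f) <= M / 28350.
Proof.
  intros [H0 [HD HC]] [Hub _].
  assert (HM : forall t, I11 t -> Rabs (D 6%nat t) <= M).
  { intros t Ht. apply Hub. exists t. split; auto. }
  pose proof cc_pos as Hc0. pose proof cc_ub as Hc1. pose proof cc2 as Hc2.
  assert (B1 := combine 1 (-1) 0 0 D M (-1) (-cc) ltac:(ring) HD HC HM ltac:(lra) ltac:(lra) ltac:(lra)
     (fun t Ht => K1_nn t ltac:(lra))).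
  assert (B2 := combine 1 (-1) (-cc) (3/5) D M (-cc) 0 ltac:(ring) HD HC HM ltac:(lra) ltac:(lra) ltac:(lra)
     (fun t Ht => K2_nn t ltac:(lra))).
  assert (B3 := combine (-1) 1 cc (3/5) D M 0 cc ltac:(ring) HD HC HM ltac:(lra) ltac:(lra) ltac:(lra)
     (fun t Ht => K3_nn t ltac:(lra))).
  assert (B4 := combine (-1) 1 0 0 D M cc 1 ltac:(ring) HD HC HM ltac:(lra) ltac:(lra) ltac:(lra)
     (fun t Ht => K4_nn t ltac:(lra))).
  rewrite !RInt_P0 in B1, B2, B3, B4.
  pose proof (ident D) as ID. pose proof (ident P) as IP. cbv zeta in ID, IP.
  assert (HcD : forall a b, -1 <= a -> a <= b -> b <= 1 -> ex_RInt (D 0%nat) a b).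
  { intros a b Ha Hab Hb. apply ex_RInt_D; auto. apply (deriv_cont _ (D 1%nat)). apply HD; lia. }
  assert (HI : Iq f = RInt (D 0%nat) (-1) (-cc) + RInt (D 0%nat) (-cc) 0 + RInt (D 0%nat) 0 cc
                     + RInt (D 0%nat) cc 1).
  { unfold Iq.
    rewrite (RInt_ext f (D 0%nat)).
    2:{ intros x Hx. rewrite Rmin_left, Rmax_right in Hx by lra. symmetry. apply H0. unfold I11; lra. }
    rewrite <- (RInt_Chasles (D 0%nat) (-1) cc 1) by (apply HcD; lra).
    rewrite <- (RInt_Chasles (D 0%nat) (-1) 0 cc) by (apply HcD; lra).
    rewrite <- (RInt_Chasles (D 0%nat) (-1) (-cc) 0) by (apply HcD; lra).
    unfold plus; simpl. ring. }
  assert (HT : Tq f = 2/5 * (1/3 * (D 0%nat (-1) + 4 * D 0%nat 0 + D 0%nat 1)) + 3/5 * (D 0%nat (-cc) + D 0%nat cc)).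
  { unfold Tq. fold cc. rewrite !H0; unfold I11; try lra. }
  assert (HPv : 2/5 * (1/3 * (P 0%nat (-1) + 4 * P 0%nat 0 + P 0%nat 1)) + 3/5 * (P 0%nat (-cc) + P 0%nat cc) = 7/16200).
  { unfold P. replace ((-cc)^6) with ((cc*cc)*(cc*cc)*(cc*cc)) by ring.
    replace (cc^6) with ((cc*cc)*(cc*cc)*(cc*cc)) by ring. rewrite Hc2. field. }
  rewrite HT, HI, <- ID.
  apply Rabs_le_between in B1. apply Rabs_le_between in B2. apply Rabs_le_between in B3. apply Rabs_le_between in B4.
  apply Rabs_le. rewrite HPv in IP.
  set (S := Phi (Kf 1 (-1) 0 0) P (- cc) - Phi (Kf 1 (-1) 0 0) P (-1) +
       (Phi (Kf 1 (-1) (- cc) (3 / 5)) P 0 - Phi (Kf 1 (-1) (- cc) (3 / 5)) P (- cc)) +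
       (Phi (Kf (-1) 1 cc (3 / 5)) P cc - Phi (Kf (-1) 1 cc (3 / 5)) P 0) +
       (Phi (Kf (-1) 1 0 0) P 1 - Phi (Kf (-1) 1 0 0) P cc)) in IP.
  assert (Hsum : M * (Phi (Kf 1 (-1) 0 0) P (- cc) - Phi (Kf 1 (-1) 0 0) P (-1) - ((- cc) ^ 7 - (-1) ^ 7) / 5040)
    + M * (Phi (Kf 1 (-1) (- cc) (3 / 5)) P 0 - Phi (Kf 1 (-1) (- cc) (3 / 5)) P (- cc) - (0 ^ 7 - (- cc) ^ 7) / 5040)
    + M * (Phi (Kf (-1) 1 cc (3 / 5)) P cc - Phi (Kf (-1) 1 cc (3 / 5)) P 0 - (cc ^ 7 - 0 ^ 7) / 5040)
    + M * (Phi (Kf (-1) 1 0 0) P 1 - Phi (Kf (-1) 1 0 0) P cc - (1 ^ 7 - cc ^ 7) / 5040) = M / 28350).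
  { transitivity (M * (S - 2/5040)); [unfold S; field|]. rewrite IP. field. }
  lra.
Qed.
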